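(* Let $A$ be a semiprime non-commutative associative algebra over $\Phi$ with center $Z$. Then: (i) the map $\mathrm{Inn}(A)\to \mathrm{Der}(A)/I_Z$, $\mathrm{ad}\,a\mapsto \mathrm{ad}\,a+I_Z$, is an injective Lie algebra homomorphism whose image is an essential ideal of $\mathrm{Der}(A)/I_Z$; (ii) if $Z$ contains no non-zero associative ideals of $A$ (in particular, if $A$ is prime), then $I_Z=0$.
   Context: $\Phi$ is a unital commutative ring in which $2$ and $3$ are invertible; all algebras are $\Phi$-modules. $\mathrm{Der}(A)$ is the Lie algebra (under $[\delta,\mu]=\delta\mu-\mu\delta$) of all associative derivations $\delta\colon A\to A$ ($\delta(xy)=\delta(x)y+x\delta(y)$). For $a\in A$, $\mathrm{ad}\,a\colon A\to A$, $y\mapsto ay-ya$, and $\mathrm{Inn}(A)=\{\mathrm{ad}\,a: a\in A\}$ is the ideal of inner derivations. $Z$ is the center of $A$ and $I_Z=\{\delta\in\mathrm{Der}(A): \delta(A)\subseteq Z\}$, a Lie ideal of $\mathrm{Der}(A)$. An ideal of a Lie algebra is essential if it has non-zero intersection with every non-zero ideal. *)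

(* Defs.v *)
From HB Require Import structures.
From mathcomp Require Import all_boot all_order all_algebra.
Set Implicit Arguments. Unset Strict Implicit. Unset Printing Implicit Defensive.
Import GRing.Theory.
Local Open Scope ring_scope.

Definition assoc_algebra (Phi : comPzRingType) (A : lmodType Phi)
    (mul : A -> A -> A) : Prop :=
  [/\ forall x y z, mul (mul x y) z = mul x (mul y z),
      forall x y z, mul (x + y) z = mul x z + mul y z,
      forall x y z, mul x (y + z) = mul x y + mul x z,
      forall (k : Phi) x y, mul (k *: x) y = k *: mul x y
    & forall (k : Phi) x y, mul x (k *: y) = k *: mul x y].

Definition alg_ideal (Phi : comPzRingType) (A : lmodType Phi)
    (mul : A -> A -> A) (I : A -> Prop) : Prop :=
  [/\ I 0,
      forall x y, I x -> I y -> I (x + y),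
      forall (k : Phi) x, I x -> I (k *: x),
      forall a x, I x -> I (mul a x)
    & forall a x, I x -> I (mul x a)].

Definition semiprime (Phi : comPzRingType) (A : lmodType Phi)
    (mul : A -> A -> A) : Prop :=
  forall I, alg_ideal mul I ->
    (forall x y, I x -> I y -> mul x y = 0) -> forall x, I x -> x = 0.

Definition prime_alg (Phi : comPzRingType) (A : lmodType Phi)
    (mul : A -> A -> A) : Prop :=
  forall I J, alg_ideal mul I -> alg_ideal mul J ->
    (forall x y, I x -> J y -> mul x y = 0) ->
    (forall x, I x -> x = 0) \/ (forall y, J y -> y = 0).

Definition commutative_alg (A : Type) (mul : A -> A -> A) : Prop :=
  forall x y, mul x y = mul y x.

Definition center (A : Type) (mul : A -> A -> A) (z : A) : Prop :=
  forall x, mul z x = mul x z.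

Definition is_der (Phi : comPzRingType) (A : lmodType Phi)
    (mul : A -> A -> A) (d : A -> A) : Prop :=
  [/\ forall x y, d (x + y) = d x + d y,
      forall (k : Phi) x, d (k *: x) = k *: d x
    & forall x y, d (mul x y) = mul (d x) y + mul x (d y)].

Definition ad (A : zmodType) (mul : A -> A -> A) (a : A) : A -> A :=
  fun y => mul a y - mul y a.

Definition lie (A : zmodType) (d m : A -> A) : A -> A :=
  fun x => d (m x) - m (d x).

Definition in_IZ (Phi : comPzRingType) (A : lmodType Phi)
    (mul : A -> A -> A) (d : A -> A) : Prop :=
  is_der mul d /\ forall x, center mul (d x).

Definition is_inner (A : zmodType) (mul : A -> A -> A) (d : A -> A) : Prop :=
  exists a, forall x, d x = ad mul a x.

Definition der_ideal (Phi : comPzRingType) (A : lmodType Phi)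
    (mul : A -> A -> A) (J : (A -> A) -> Prop) : Prop :=
  (forall d, J d -> is_der mul d) /\
  [/\ J (fun _ => 0),
      forall d m, J d -> J m -> J (fun x => d x + m x),
      forall (k : Phi) d, J d -> J (fun x => k *: d x),
      forall d m, is_der mul d -> J m -> J (lie d m)
    & forall d m, J d -> (forall x, d x = m x) -> J m].

(* Preimage in Der(A) of the image of Inn(A) in Der(A)/I_Z:  Inn(A) + I_Z *)
Definition inn_plus_IZ (Phi : comPzRingType) (A : lmodType Phi)
    (mul : A -> A -> A) (d : A -> A) : Prop :=
  exists a m, in_IZ mul m /\ forall x, d x = ad mul a x + m x.

(* Main.v *)
Require Import Defs.
From HB Require Import structures.
From mathcomp Require Import all_boot all_order all_algebra.
From Stdlib Require Import Classical FunctionalExtensionality.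
Import GRing.Theory.
Local Open Scope ring_scope.
Set Implicit Arguments. Unset Strict Implicit.

Section Aux.
Variables (Phi : comPzRingType) (A : lmodType Phi) (mul : A -> A -> A).
Hypothesis hA : assoc_algebra mul.

Lemma mA x y z : mul (mul x y) z = mul x (mul y z). Proof. by case: hA. Qed.
Lemma mDl x y z : mul (x + y) z = mul x z + mul y z. Proof. by case: hA. Qed.
Lemma mDr x y z : mul x (y + z) = mul x y + mul x z. Proof. by case: hA. Qed.
Lemma mZl (k : Phi) x y : mul (k *: x) y = k *: mul x y. Proof. by case: hA. Qed.
Lemma mZr (k : Phi) x y : mul x (k *: y) = k *: mul x y. Proof. by case: hA. Qed.

Lemma m0l x : mul 0 x = 0.
Proof. have H : mul 0 x + mul 0 x = mul 0 x + 0 by rewrite addr0 -mDl addr0.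
exact: (addrI _ H). Qed.
Lemma m0r x : mul x 0 = 0.
Proof. have H : mul x 0 + mul x 0 = mul x 0 + 0 by rewrite addr0 -mDr addr0.
exact: (addrI _ H). Qed.
Lemma mNl x y : mul (- x) y = - mul x y.
Proof. by apply/eqP; rewrite -addr_eq0 -mDl addNr m0l. Qed.
Lemma mNr x y : mul x (- y) = - mul x y.
Proof. by apply/eqP; rewrite -addr_eq0 -mDr addNr m0r. Qed.
Lemma mBl x y z : mul (x - y) z = mul x z - mul y z.
Proof. by rewrite mDl mNl. Qed.
Lemma mBr x y z : mul x (y - z) = mul x y - mul x z.
Proof. by rewrite mDr mNr. Qed.

Lemma der0 d : is_der mul d -> d 0 = 0.
Proof. case=> hd _ _; have H : d 0 + d 0 = d 0 + 0 by rewrite addr0 -hd addr0.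
exact: (addrI _ H). Qed.
Lemma derN d x : is_der mul d -> d (- x) = - d x.
Proof. move=> D; case: (D) => hd _ _.
by apply/eqP; rewrite -addr_eq0 -hd addNr der0. Qed.
Lemma derB d x y : is_der mul d -> d (x - y) = d x - d y.
Proof. by move=> D; case: (D) => hd _ _; rewrite hd derN. Qed.

Lemma ad_der a : is_der mul (ad mul a).
Proof.
split=> [x y|k x|x y]; rewrite /ad.
- by rewrite mDr mDl opprD addrACA.
- by rewrite mZr mZl -scalerBr.
- rewrite !mBl !mBr !mA addrA; congr (_ + _).
  by rewrite addrNK.
Qed.

Lemma lie_ad a b x : lie (ad mul a) (ad mul b) x = ad mul (ad mul a b) x.
Proof.
rewrite /lie /ad !mBl !mBr !mA.
apply/eqP; rewrite -subr_eq0 !(opprB, opprD, opprK, addrA).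
rewrite (@GRing.add A).[ACl ((1*12)*(2*5)*(3*10)*(4*7)*(6*9)*(8*11))]/= !(subrr, addNr) !addr0 //.
Qed.

Ltac gnorm := apply/eqP; rewrite -subr_eq0 !(opprB, opprD, opprK, addrA).

Lemma lie_der D M : is_der mul D -> is_der mul M -> is_der mul (lie D M).
Proof.
move=> hD hM; case: (hD) => D1 D2 D3; case: (hM) => M1 M2 M3.
split=> [x y|k x|x y]; rewrite /lie.
- rewrite M1 D1 D1 M1 opprD addrACA //.
- by rewrite M2 D2 D2 M2 scalerBr.
- rewrite M3 D1 D3 D3 D3 M1 M3 M3 mBl mBr. gnorm.
  by rewrite (@GRing.add A).[ACl ((1*10)*(2*7)*(3*6)*(4*12)*(5*9)*(8*11))]/= !(subrr, addNr) !addr0.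
Qed.

Lemma lie_ad_r D a x : is_der mul D -> lie D (ad mul a) x = ad mul (D a) x.
Proof.
move=> hD; case: (hD) => D1 D2 D3; rewrite /lie /ad derB // !D3. gnorm.
by rewrite (@GRing.add A).[ACl ((1*8)*(2*6)*(3*5)*(4*7))]/= !(subrr, addNr) !addr0.
Qed.

Lemma lie_ad_l D a x : is_der mul D -> lie (ad mul a) D x = ad mul (- D a) x.
Proof.
move=> hD; have := lie_ad_r a x hD; rewrite /lie /ad mNl mNr => E.
by rewrite -opprB E opprB opprK addrC.
Qed.

Lemma cen0 : center mul 0. Proof. by move=> x; rewrite m0l m0r. Qed.
Lemma cenD c c' : center mul c -> center mul c' -> center mul (c + c').
Proof. by move=> h h' x; rewrite mDl mDr h h'. Qed.
Lemma cenN c : center mul c -> center mul (- c).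
Proof. by move=> h x; rewrite mNl mNr h. Qed.
Lemma cenB c c' : center mul c -> center mul c' -> center mul (c - c').
Proof. by move=> h h'; apply: cenD => //; apply: cenN. Qed.
Lemma cenZ (k : Phi) c : center mul c -> center mul (k *: c).
Proof. by move=> h x; rewrite mZl mZr h. Qed.

Lemma der_cen D c : is_der mul D -> center mul c -> center mul (D c).
Proof.
move=> hD hc w; case: (hD) => D1 D2 D3.
have : D (mul c w) = D (mul w c) by rewrite hc.
rewrite !D3 (hc (D w)) => E; apply: (addrI (mul (D w) c)).
by rewrite -E addrC.
Qed.

Lemma IZ0 : in_IZ mul (fun _ => 0).
Proof. split; last by move=> _; apply: cen0. by split=> *; rewrite ?addr0 ?scaler0 ?m0l ?m0r ?addr0. Qed.

Lemma IZ_add d m : in_IZ mul d -> in_IZ mul m -> in_IZ mul (fun x => d x + m x).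
Proof.
move=> [[d1 d2 d3] dc] [[m1 m2 m3] mc]; split; last by move=> x; apply: cenD.
split=> [x y|k x|x y].
- by rewrite d1 m1 addrACA.
- by rewrite d2 m2 scalerDr.
- by rewrite d3 m3 mDl mDr addrACA.
Qed.

Lemma IZ_scale (k : Phi) d : in_IZ mul d -> in_IZ mul (fun x => k *: d x).
Proof.
move=> [[d1 d2 d3] dc]; split; last by move=> x; apply: cenZ.
split=> [x y|k' x|x y].
- by rewrite d1 scalerDr.
- by rewrite d2 !scalerA mulrC.
- by rewrite d3 mZl mZr scalerDr.
Qed.

Lemma IZ_lie D m : is_der mul D -> in_IZ mul m -> in_IZ mul (lie D m).
Proof.
move=> hD [hm mc]; split; first exact: lie_der.
by move=> x; rewrite /lie; apply: cenB; [apply: der_cen|].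
Qed.

Lemma L0 c : semiprime mul -> center mul c -> mul c c = 0 -> c = 0.
Proof.
move=> hsp hc hcc.
pose K := fun u => exists (k : Phi) r, u = k *: c + mul r c.
have hK : alg_ideal mul K.
  split.
  - by exists 0, 0; rewrite scale0r m0l addr0.
  - move=> x y [k [r ->]] [k' [r' ->]]; exists (k + k'), (r + r').
    by rewrite scalerDl mDl addrACA.
  - move=> k x [k' [r ->]]; exists (k * k'), (k *: r).
    by rewrite scalerDr scalerA mZl.
  - move=> a x [k [r ->]]; exists 0, (k *: a + mul a r).
    by rewrite scale0r add0r mDr mZr mDl mZl -mA.
  - move=> a x [k [r ->]]; exists 0, (k *: a + mul r a).
    by rewrite scale0r add0r !mDl !mZl !mA !(hc a).
have cK : K c by exists 1, 0; rewrite scale1r m0l addr0.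
have c0 : forall r, mul c (mul r c) = 0.
  by move=> r; rewrite -mA hc mA hcc m0r.
have c1 : forall r, mul (mul r c) c = 0.
  by move=> r; rewrite mA hcc m0r.
apply: (hsp K hK _ _ cK) => x y [k [r ->]] [k' [r' ->]].
rewrite mDl !mDr !mZl !mZr hcc c0 c1 mA c0.
rewrite !scaler0 m0r. by rewrite !addr0.
Qed.

Lemma two_inv (v : A) : (exists u : Phi, 2%:R * u = 1) -> v + v = 0 -> v = 0.
Proof.
move=> [u hu] hv.
by rewrite -[v]scale1r -hu mulrC -scalerA scaler_nat mulr2n hv scaler0.
Qed.

Lemma key d x y z : (exists u : Phi, 2%:R * u = 1) -> semiprime mul ->
  in_IZ mul d -> mul (d x) (ad mul y z) = 0.
Proof.
move=> h2 hsp [hd dc]; case: (hd) => d1 d2 d3.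
have S1 : forall y z, d (ad mul y z) = 0.
  move=> y0 z0; rewrite /ad derB // !d3 (dc y0) (dc z0).
  by rewrite (addrC (mul y0 (d z0))) subrr.
have S2 : forall x y z, mul (d x) (ad mul y z) + mul (d y) (ad mul x z) = 0.
  move=> x0 y0 z0; have := dc (mul x0 y0) z0.
  rewrite d3 mDl mDr /ad !mBr.
  have e1 : mul (mul (d x0) y0) z0 = mul (d x0) (mul y0 z0) by rewrite mA.
  have e2 : mul (mul x0 (d y0)) z0 = mul (d y0) (mul x0 z0) by rewrite -(dc y0 x0) mA.
  have e3 : mul z0 (mul (d x0) y0) = mul (d x0) (mul z0 y0) by rewrite -mA -(dc x0 z0) mA.
  have e4 : mul z0 (mul x0 (d y0)) = mul (d y0) (mul z0 x0) by rewrite -mA (dc y0).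
  rewrite e1 e2 e3 e4 => E.
  by apply/eqP; rewrite addrACA -opprD subr_eq0 E.
have S2' : forall y z, mul (d y) (ad mul y z) = 0.
  by move=> y0 z0; apply: (two_inv h2); apply: S2.
apply: L0 => //.
- move=> w; apply/eqP; rewrite -subr_eq0.
  rewrite mA -(mA w (d x)) -(dc x w) mA -mBr.
  have := S2 x (ad mul y z) w; rewrite S1 m0l addr0 /ad => ->; done.
- have E : mul (d x) (ad mul y z) = - mul (d y) (ad mul x z).
    by apply/eqP; rewrite -addr_eq0 S2.
  rewrite {2}E mNr mA -(mA (ad mul y z) (d y)) -(dc y) S2' m0l m0r oppr0 //.
Qed.

Lemma partc a : (exists u : Phi, 2%:R * u = 1) -> semiprime mul ->
  in_IZ mul (ad mul a) -> forall x, ad mul a x = 0.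
Proof.
move=> h2 hsp hI x; apply: L0 => //; first by case: hI.
exact: key.
Qed.

Lemma partii1 : (exists u : Phi, 2%:R * u = 1) -> semiprime mul ->
  (forall I, alg_ideal mul I -> (forall x, I x -> center mul x) ->
        forall x, I x -> x = 0) ->
      forall d, in_IZ mul d -> forall x, d x = 0.
Proof.
move=> h2 hsp hZ d hd x.
pose I := fun u => center mul u /\ forall y z, mul u (ad mul y z) = 0.
have Ir : forall u b, I u -> I (mul u b).
  move=> u b [uc uk]; split.
  - move=> w; rewrite mA -(mA w) -(uc w) mA.
    by have := uk b w; rewrite /ad mBr => /eqP; rewrite subr_eq0 => /eqP.
  - by move=> y z; rewrite uc mA uk m0r.
have hI : alg_ideal mul I.
  split.
  - by split; [apply: cen0 | move=> y z; rewrite m0l].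
  - move=> u v [uc uk] [vc vk]; split; first exact: cenD.
    by move=> y z; rewrite mDl uk vk addr0.
  - move=> k u [uc uk]; split; first exact: cenZ.
    by move=> y z; rewrite mZl uk scaler0.
  - by move=> b u hu; case: (hu) => uc _; rewrite -uc; apply: Ir.
  - by move=> b u hu; apply: Ir.
apply: (hZ I hI (fun u hu => proj1 hu)).
split; first by case: hd.
by move=> y z; apply: key.
Qed.

Lemma prime_noZ : prime_alg mul -> ~ commutative_alg mul ->
  (forall I, alg_ideal mul I -> (forall x, I x -> center mul x) ->
        forall x, I x -> x = 0).
Proof.
move=> hp hnc I hI hIc.
case: (hI) => I0 ID IZ Il Ir.
pose J := fun y => forall x, I x -> mul x y = 0.
have hJ : alg_ideal mul J.
  split.
  - by move=> x _; rewrite m0r.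
  - by move=> y y' hy hy' x hx; rewrite mDr hy // hy' // addr0.
  - by move=> k y hy x hx; rewrite mZr hy // scaler0.
  - by move=> a y hy x hx; rewrite -mA hy //; apply: Ir.
  - by move=> a y hy x hx; rewrite -mA hy // m0l.
have [//|hJ0] := hp I J hI hJ (fun x y hx hy => hy x hx).
exfalso; apply: hnc => p q; apply/eqP; rewrite -subr_eq0.
apply/eqP; apply: (hJ0 (ad mul p q)) => x hx.
rewrite /ad mBr -[mul x (mul q p)]mA (hIc x hx q) mA -(hIc _ (Ir p _ hx) q) mA.
by rewrite subrr.
Qed.

Lemma der_add d m : is_der mul d -> is_der mul m -> is_der mul (fun x => d x + m x).
Proof.
move=> [d1 d2 d3] [m1 m2 m3]; split=> [x y|k x|x y].
- by rewrite d1 m1 addrACA.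
- by rewrite d2 m2 scalerDr.
- by rewrite d3 m3 mDl mDr addrACA.
Qed.
Lemma ad_add a b x : ad mul (a + b) x = ad mul a x + ad mul b x.
Proof. by rewrite /ad mDl mDr opprD addrACA. Qed.
Lemma ad_scale (k : Phi) a x : ad mul (k *: a) x = k *: ad mul a x.
Proof. by rewrite /ad mZl mZr scalerBr. Qed.
End Aux.
Unset Implicit Arguments. Set Strict Implicit.

Theorem lemma2p4 (Phi : comPzRingType) (A : lmodType Phi) (mul : A -> A -> A)
  (h2 : exists u : Phi, 2%:R * u = 1) (h3 : exists u : Phi, 3%:R * u = 1)
  (hA : assoc_algebra mul) (hsp : semiprime mul) (hnc : ~ commutative_alg mul) :
  (* (i) *)
  ( (* ad a is a derivation; Inn(A) is a Lie subalgebra (ad is a Lie hom),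
       so a+I_Z composed with inclusion is a Lie algebra homomorphism *)
    (forall a, is_der mul (ad mul a))
    /\ (forall a b, is_inner mul (lie (ad mul a) (ad mul b)))
    (* injectivity of ad a |-> ad a + I_Z *)
    /\ (forall a, in_IZ mul (ad mul a) -> forall x, ad mul a x = 0)
    (* the image (Inn(A)+I_Z)/I_Z is an ideal of Der(A)/I_Z *)
    /\ der_ideal mul (inn_plus_IZ mul)
    (* ... and it is essential: every non-zero ideal J/I_Z of Der(A)/I_Z
       (J an ideal of Der(A) containing I_Z properly) meets it non-trivially *)
    /\ (forall J, der_ideal mul J ->
          (forall d, in_IZ mul d -> J d) ->
          (exists d, J d /\ ~ in_IZ mul d) ->
          exists d, J d /\ inn_plus_IZ mul d /\ ~ in_IZ mul d) )
  /\
  (* (ii) *)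
  ( ((forall I, alg_ideal mul I -> (forall x, I x -> center mul x) ->
        forall x, I x -> x = 0) ->
      forall d, in_IZ mul d -> forall x, d x = 0)
    /\ (prime_alg mul -> forall d, in_IZ mul d -> forall x, d x = 0) ).
Proof.
have hpc := partc hA h2 hsp.
split; last first.
  split; first exact: (partii1 hA).
  by move=> hp; apply: (partii1 hA) => //; apply: (prime_noZ hA).
split; first exact: ad_der.
split; first by move=> a b; exists (ad mul a b) => x; apply: (lie_ad hA).
split; first exact: hpc.
split.
  split.
    move=> d [a [m [[hm _] E]]].
    have -> : d = (fun x => ad mul a x + m x) by apply: functional_extensionality.
    by apply: (der_add hA) => //; apply: ad_der.
  split.
  - exists 0, (fun _ => 0); split; first exact: (IZ0 hA).
    by move=> x; rewrite /ad (m0l hA) (m0r hA) subrr addr0.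
  - move=> d m [a [m1 [h1 E1]]] [b [m2 [h2' E2]]].
    exists (a + b), (fun x => m1 x + m2 x); split; first exact: (IZ_add hA).
    by move=> x; rewrite E1 E2 (ad_add hA) addrACA.
  - move=> k d [a [m [h E]]]; exists (k *: a), (fun x => k *: m x).
    split; first exact: (IZ_scale hA).
    by move=> x; rewrite E (ad_scale hA) scalerDr.
  - move=> D m hD [a [m' [h E]]]; exists (D a), (lie D m').
    split; first exact: (IZ_lie hA).
    move=> x; rewrite -lie_ad_r // /lie !E.
    by case: hD => D1 _ _; rewrite D1 opprD addrACA.
  - move=> d m [a [m' [h E]]] Edm; exists a, m'; split => // x.
    by rewrite -Edm E.
move=> J [Jder [J0 JD JZ Jl Jext]] hIZ [d [Jd nd]].
have hd := Jder d Jd.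
case: (classic (exists a, ~ in_IZ mul (lie (ad mul a) d))) => [[a na]|H].
  exists (lie (ad mul a) d); split; first exact: Jl (ad_der hA a) Jd.
  split => //; exists (- d a), (fun _ => 0); split; first exact: (IZ0 hA).
  by move=> x; rewrite (lie_ad_l hA) // addr0.
exfalso; apply: nd; split => // x y.
have H1 : in_IZ mul (lie (ad mul x) d).
  by apply: NNPP => hn; apply: H; exists x.
have E : lie (ad mul x) d = ad mul (- d x).
  by apply: functional_extensionality => z; rewrite (lie_ad_l hA).
rewrite E in H1.
have := hpc _ H1 y; rewrite /ad (mNl hA) (mNr hA) opprK => /eqP.
by rewrite addrC subr_eq0 => /eqP.
Qed.
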